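(* Let $K\in\mathbb N$ and let $d_2,\dots,d_{K+1}$ be real numbers. Suppose there exist constants $a,b,c>0$ such that $$d_{k+1}\le\frac ak+b(1+\log k)+c\sum_{\ell=2}^k\frac{d_\ell}{k-\ell+2}\quad\text{for all }k\in[K].$$ Then $$d_{k+1}\le\left(\frac ak+b(1+\log k)\right)\sum_{i=0}^{k-1}\big(2c(1+\log k)\big)^i\quad\text{for all }k\in[K].$$
   Context: $\log$ is the natural logarithm; $[K]=\{1,\dots,K\}$; an empty sum equals $0$. *)

(* Defs.v *)
From Stdlib Require Import Reals List.
Open Scope R_scope.

(* sumR m n f = sum_{l = m}^{n} f l ; empty sum (n < m) is 0. *)
Definition sumR (m n : nat) (f : nat -> R) : R :=
  fold_right Rplus 0 (map f (seq m (S n - m))).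

(* Main.v *)
Require Import Defs.
From Stdlib Require Import Reals List.
From Stdlib Require Import Lra Lia Psatz.
Open Scope R_scope.

Lemma ln_le' : forall x y, 0 < x -> x <= y -> ln x <= ln y.
Proof.
  intros x y Hx Hxy. destruct (Rle_lt_or_eq_dec x y Hxy) as [H|H].
  - left; apply ln_increasing; auto.
  - subst; lra.
Qed.

Lemma ln_le_sub1 : forall y, 0 < y -> ln y <= y - 1.
Proof.
  intros y Hy. destruct (Rle_or_lt (ln y) (y - 1)) as [H|H]; auto.
  exfalso. pose proof (exp_increasing _ _ H) as E. rewrite exp_ln in E by auto.
  pose proof (exp_ineq1_le (y - 1)). lra.
Qed.

Lemma ln_step : forall m : nat, (1 <= m)%nat ->
  1 / INR (S m) <= ln (INR (S m)) - ln (INR m).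
Proof.
  intros m Hm. rewrite S_INR.
  assert (Hx : 1 <= INR m) by (apply (le_INR 1); auto).
  set (x := INR m) in *.
  assert (E : x = (x + 1) * (x / (x + 1))) by (field; lra).
  assert (L : ln x = ln (x+1) + ln (x / (x+1))).
  { rewrite E at 1. apply ln_mult; try lra. apply Rdiv_lt_0_compat; lra. }
  pose proof (ln_le_sub1 (x / (x+1))) as H.
  assert (0 < x / (x+1)) by (apply Rdiv_lt_0_compat; lra).
  specialize (H H0).
  assert (x / (x+1) - 1 = - (1 / (x+1))) by (field; lra).
  lra.
Qed.

Lemma fold_plus_acc : forall l x, fold_right Rplus x l = fold_right Rplus 0 l + x.
Proof. induction l; intros; simpl; [lra| rewrite IHl; lra]. Qed.

Lemma fold_seq_S : forall (f : nat -> R) len m,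
  fold_right Rplus 0 (map f (seq m (S len))) =
  fold_right Rplus 0 (map f (seq m len)) + f (m + len)%nat.
Proof.
  intros. rewrite seq_S, map_app, fold_right_app. simpl.
  rewrite fold_plus_acc. lra.
Qed.

Lemma sumR_S : forall m n f, (m <= S n)%nat -> sumR m (S n) f = sumR m n f + f (S n).
Proof.
  intros. unfold sumR. replace (S (S n) - m)%nat with (S (S n - m)) by lia.
  rewrite fold_seq_S. replace (m + (S n - m))%nat with (S n) by lia. reflexivity.
Qed.

Lemma sumR_empty : forall m n f, (n < m)%nat -> sumR m n f = 0.
Proof. intros. unfold sumR. replace (S n - m)%nat with 0%nat by lia. reflexivity. Qed.

Lemma sumR_single : forall m f, sumR m m f = f m.
Proof. intros. unfold sumR. replace (S m - m)%nat with 1%nat by lia. simpl. lra. Qed.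

Lemma fold_le : forall (f g : nat -> R) l, (forall x, In x l -> f x <= g x) ->
  fold_right Rplus 0 (map f l) <= fold_right Rplus 0 (map g l).
Proof.
  induction l; intros H; simpl; [lra|].
  apply Rplus_le_compat; [apply H; left; auto | apply IHl; intros; apply H; right; auto].
Qed.

Lemma sumR_le : forall m n f g, (forall l, (m <= l <= n)%nat -> f l <= g l) ->
  sumR m n f <= sumR m n g.
Proof.
  intros. unfold sumR. apply fold_le. intros x Hx. apply in_seq in Hx. apply H. lia.
Qed.

Lemma sumR_scal : forall m n f c, sumR m n (fun l => c * f l) = c * sumR m n f.
Proof.
  intros. unfold sumR. generalize (seq m (S n - m)). induction l; simpl; [lra|].
  rewrite IHl. lra.
Qed.

Lemma sumR_plus : forall m n f g, sumR m n (fun l => f l + g l) = sumR m n f + sumR m n g.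
Proof.
  intros. unfold sumR. generalize (seq m (S n - m)). induction l; simpl; [lra|].
  rewrite IHl. lra.
Qed.

Lemma sumR_mono_upper : forall f n1 p, (forall i, 0 <= f i) ->
  sumR 0 n1 f <= sumR 0 (n1 + p) f.
Proof.
  intros f n1 p Hf. induction p.
  - rewrite Nat.add_0_r; lra.
  - rewrite Nat.add_succ_r, sumR_S by lia. specialize (Hf (S (n1 + p))). lra.
Qed.

Lemma geo : forall r n, sumR 0 (S n) (fun i => r ^ i) = 1 + r * sumR 0 n (fun i => r ^ i).
Proof.
  intros r n. induction n.
  - rewrite sumR_S by lia. rewrite sumR_single. simpl. ring.
  - rewrite sumR_S by lia. rewrite IHn at 1. rewrite (sumR_S 0 n) by lia. simpl. ring.
Qed.

Lemma harmA : forall n, (1 <= n)%nat ->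
  sumR 2 (S n) (fun l => 1 / INR (l - 1)) <= 1 + ln (INR n).
Proof.
  induction n; intros Hn; [lia|].
  destruct n.
  - rewrite sumR_single. simpl. rewrite ln_1. lra.
  - rewrite sumR_S by lia. specialize (IHn ltac:(lia)).
    replace (S (S (S n)) - 1)%nat with (S (S n)) by lia.
    pose proof (ln_step (S n) ltac:(lia)). lra.
Qed.

Lemma harmB : forall k n, (1 <= n <= k)%nat ->
  sumR 2 n (fun l => 1 / INR (k - l + 2)) <= ln (INR k) - ln (INR (k - n + 1)).
Proof.
  intros k n. induction n; intros Hn; [lia|].
  destruct n.
  - rewrite sumR_empty by lia. replace (k - 1 + 1)%nat with k by lia. lra.
  - rewrite sumR_S by lia. specialize (IHn ltac:(lia)).
    replace (k - S (S n) + 2)%nat with (S (k - S (S n) + 1)) by lia.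
    replace (k - S n + 1)%nat with (S (k - S (S n) + 1)) in IHn by lia.
    pose proof (ln_step (k - S (S n) + 1) ltac:(lia)).
    lra.
Qed.

Definition Fk (a b : R) (j : nat) := a / INR j + b * (1 + ln (INR j)).
Definition Gs (c : R) (j : nat) := sumR 0 (j - 1) (fun i => (2 * c * (1 + ln (INR j))) ^ i).

Lemma lnINR_ge0 : forall j, (1 <= j)%nat -> 0 <= ln (INR j).
Proof.
  intros. rewrite <- ln_1. apply ln_le'; [lra|]. apply (le_INR 1); auto.
Qed.

Lemma Fk_ge0 : forall a b j, 0 < a -> 0 < b -> (1 <= j)%nat -> 0 <= Fk a b j.
Proof.
  intros. unfold Fk. pose proof (lnINR_ge0 j H1).
  assert (0 < INR j) by (apply lt_0_INR; lia).
  assert (0 <= a / INR j) by (apply Rlt_le, Rdiv_lt_0_compat; auto).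
  nra.
Qed.

Lemma main_step (K : nat) (d : nat -> R) (a b c : R)
  (ha : 0 < a) (hb : 0 < b) (hc : 0 < c)
  (hrec : forall k : nat, (1 <= k <= K)%nat ->
     d (S k) <= a / INR k + b * (1 + ln (INR k))
                + c * sumR 2 k (fun l => d l / INR (k - l + 2))) :
  forall k, (1 <= k <= K)%nat ->
   (forall j, (1 <= j < k)%nat -> d (S j) <= Fk a b j * Gs c j) ->
   d (S k) <= Fk a b k * Gs c k.
Proof.
  intros k Hk IH.
  pose proof (hrec k Hk) as H0.
  destruct (Nat.eq_dec k 1) as [E|Hk2].
  { subst k. rewrite sumR_empty in H0 by lia. unfold Gs, Fk. replace (1-1)%nat with 0%nat by lia.
    rewrite sumR_single. simpl in *. lra. }
  assert (Hk0 : 0 < INR k) by (apply lt_0_INR; lia).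
  set (L := 1 + ln (INR k)).
  assert (hL : 1 <= L) by (pose proof (lnINR_ge0 k ltac:(lia)); unfold L; lra).
  set (r := 2 * c * L).
  set (S' := sumR 0 (k - 2) (fun i => r ^ i)).
  assert (hr : 0 <= r) by (unfold r; nra).
  assert (hS' : 0 <= S').
  { unfold S'. pose proof (sumR_mono_upper (fun i => r ^ i) 0 (k-2) (fun i => pow_le r i hr)).
    rewrite sumR_single in H. simpl in H. lra. }
  assert (St1 : sumR 2 k (fun l => d l / INR (k - l + 2))
           <= S' * sumR 2 k (fun l => Fk a b (l - 1) / INR (k - l + 2))).
  { rewrite <- sumR_scal. apply sumR_le. intros l Hl.
    assert (Hm : 0 < INR (k - l + 2)) by (apply lt_0_INR; lia).
    assert (Ed : d l = d (S (l - 1))) by (f_equal; lia).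
    rewrite Ed.
    pose proof (IH (l - 1)%nat ltac:(lia)) as Hd.
    assert (HG : Gs c (l - 1) <= S').
    { unfold Gs, S'.
      apply Rle_trans with (sumR 0 (l - 1 - 1) (fun i => r ^ i)).
      - apply sumR_le. intros i _. apply pow_incr. split.
        + pose proof (lnINR_ge0 (l-1) ltac:(lia)). nra.
        + unfold r, L. assert (ln (INR (l - 1)) <= ln (INR k)).
          { apply ln_le'. apply lt_0_INR; lia. apply le_INR; lia. }
          nra.
      - replace (k - 2)%nat with (l - 1 - 1 + (k - l))%nat by lia.
        apply sumR_mono_upper. intros; apply pow_le; auto. }
    pose proof (Fk_ge0 a b (l - 1) ha hb ltac:(lia)).
    assert (d (S (l - 1)) <= Fk a b (l - 1) * S').
    { apply Rle_trans with (1 := Hd). apply Rmult_le_compat_l; auto. }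
    unfold Rdiv. replace (S' * (Fk a b (l - 1) * / INR (k - l + 2)))
      with ((Fk a b (l - 1) * S') * / INR (k - l + 2)) by ring.
    apply Rmult_le_compat_r; auto. left; apply Rinv_0_lt_compat; auto. }
  set (A := sumR 2 k (fun l => 1 / INR (l - 1))).
  set (B := sumR 2 k (fun l => 1 / INR (k - l + 2))).
  set (p := a / INR (k + 1)).
  assert (St3 : sumR 2 k (fun l => Fk a b (l - 1) / INR (k - l + 2))
          <= p * (A + B) + b * L * B).
  { apply Rle_trans with (sumR 2 k (fun l => p * (1 / INR (l - 1) + 1 / INR (k - l + 2))
                                     + b * L * (1 / INR (k - l + 2)))).
    - apply sumR_le. intros l Hl.
      assert (Hm : 0 < INR (k - l + 2)) by (apply lt_0_INR; lia).
      assert (Hj : 0 < INR (l - 1)) by (apply lt_0_INR; lia).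
      assert (Ejm : INR (k + 1) = INR (l - 1) + INR (k - l + 2)).
      { rewrite <- plus_INR. f_equal. lia. }
      unfold p, Fk. rewrite Ejm.
      set (j := INR (l - 1)) in *. set (m := INR (k - l + 2)) in *.
      assert (Eq : (a / j + b * (1 + ln j)) / m
                   = a / (j + m) * (1 / j + 1 / m) + b * (1 + ln j) * (1 / m))
        by (field; lra).
      rewrite Eq. apply Rplus_le_compat_l.
      apply Rmult_le_compat_r. left; apply Rdiv_lt_0_compat; lra.
      apply Rmult_le_compat_l; [lra|]. unfold L, j.
      assert (ln (INR (l - 1)) <= ln (INR k)).
      { apply ln_le'. auto. apply le_INR; lia. }
      lra.
    - rewrite sumR_plus, !sumR_scal, sumR_plus. unfold A, B. lra. }
  assert (HA : A <= L).
  { unfold A. replace k with (S (k - 1)) at 1 by lia.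
    pose proof (harmA (k - 1) ltac:(lia)).
    assert (ln (INR (k - 1)) <= ln (INR k)).
    { apply ln_le'. apply lt_0_INR; lia. apply le_INR; lia. }
    unfold L. lra. }
  assert (HB : B <= L).
  { unfold B. pose proof (harmB k k ltac:(lia)).
    replace (k - k + 1)%nat with 1%nat in H by lia. simpl in H. rewrite ln_1 in H.
    unfold L. lra. }
  assert (hp : 0 <= p) by (unfold p; apply Rlt_le, Rdiv_lt_0_compat; auto; apply lt_0_INR; lia).
  assert (hpq : p <= a / INR k).
  { unfold p, Rdiv. apply Rmult_le_compat_l; [lra|]. apply Rinv_le_contravar; auto.
    apply le_INR; lia. }
  assert (HY : p * (A + B) + b * L * B <= 2 * L * Fk a b k).
  { unfold Fk. fold L.
    assert (p * (A + B) <= p * (2 * L)) by (apply Rmult_le_compat_l; lra).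
    assert (p * (2 * L) <= a / INR k * (2 * L)) by (apply Rmult_le_compat_r; lra).
    assert (b * L * B <= b * L * L) by (apply Rmult_le_compat_l; nra).
    assert (0 <= b * L * L) by (apply Rmult_le_pos; nra).
    nra. }
  assert (HG : Gs c k = 1 + r * S').
  { unfold Gs, S'. fold L. fold r. replace (k - 1)%nat with (S (k - 2)) by lia. apply geo. }
  rewrite HG.
  assert (Hc1 : c * sumR 2 k (fun l => d l / INR (k - l + 2)) <= c * (S' * (2 * L * Fk a b k))).
  { apply Rmult_le_compat_l; [lra|]. apply Rle_trans with (1 := St1).
    apply Rmult_le_compat_l; auto. lra. }
  assert (Hc2 : Fk a b k + c * (S' * (2 * L * Fk a b k)) = Fk a b k * (1 + r * S'))
    by (unfold r; ring).
  assert (H0' : d (S k) <= Fk a b k + c * sumR 2 k (fun l => d l / INR (k - l + 2))) by exact H0.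
  lra.
Qed.

Theorem mainTheorem14 (K : nat) (d : nat -> R) (a b c : R)
  (ha : 0 < a) (hb : 0 < b) (hc : 0 < c)
  (hrec : forall k : nat, (1 <= k <= K)%nat ->
     d (S k) <= a / INR k + b * (1 + ln (INR k))
                + c * sumR 2 k (fun l => d l / INR (k - l + 2))) :
  forall k : nat, (1 <= k <= K)%nat ->
    d (S k) <= (a / INR k + b * (1 + ln (INR k)))
               * sumR 0 (k - 1) (fun i => (2 * c * (1 + ln (INR k))) ^ i).
Proof.
  assert (G : forall n k, (k <= n)%nat -> (1 <= k <= K)%nat -> d (S k) <= Fk a b k * Gs c k).
  { induction n; intros k Hkn Hk; [lia|].
    apply (main_step K d a b c ha hb hc hrec k Hk).
    intros j Hj. apply IHn; lia. }
  intros k Hk. exact (G k k (le_n k) Hk).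
Qed.
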